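(* Let $D$ be a locatable digraph of order $n$ with $\gamma_{OL}(D)=n$. Then $D$ contains no double-forced vertex.
   Context: Digraphs are finite and may contain loops; between two distinct vertices there may be arcs in one or both directions, no repeated arcs. $N^-(v)=\{u: uv\text{ is an arc}\}$ (contains $v$ iff $v$ has a loop). An OLD set of $D$ is a set $S\subseteq V(D)$ such that every vertex has an in-neighbour in $S$ and for every two distinct vertices $u,w$ some vertex of $S$ lies in exactly one of $N^-(u),N^-(w)$. $D$ is locatable if it has an OLD set, and then $\gamma_{OL}(D)$ is the minimum size of an OLD set. A vertex $v$ is domination-forced if some vertex $w$ has $N^-(w)=\{v\}$; $v$ is location-forced if there is a pair $\{x,y\}$ of distinct vertices with $N^-(x)\ominus N^-(y)=\{v\}$ ($\ominus$ = symmetric difference). A vertex is double-forced if it is both domination-forced and location-forced, or if it is location-forced because of two different pairs $\{x,y\}\neq\{x',y'\}$ (i.e. $N^-(x)\ominus N^-(y)=N^-(x')\ominus N^-(y')=\{v\}$). *)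

(* Defs.v *)
From mathcomp Require Import all_boot.
Set Implicit Arguments. Unset Strict Implicit. Unset Printing Implicit Defensive.

(* A digraph on a finite vertex type V is given by its arc relation
   [arc u v] meaning "uv is an arc" (loops allowed, no repeated arcs). *)

Section Digraph.
Variables (V : finType) (arc : rel V).

Definition inN (v : V) : {set V} := [set u | arc u v].

Definition OLD (S : {set V}) : Prop :=
  (forall v, exists2 u, u \in S & u \in inN v) /\
  (forall u w, u != w ->
     exists2 s, s \in S & (s \in inN u) != (s \in inN w)).

Definition locatable : Prop := exists S, OLD S.

Definition gamma_OL_is (k : nat) : Prop :=
  (exists2 S, OLD S & #|S| = k) /\ (forall S, OLD S -> k <= #|S|).

Definition symdiff (A B : {set V}) : {set V} := (A :\: B) :|: (B :\: A).

Definition domination_forced (v : V) : Prop :=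
  exists w, inN w = [set v].

Definition loc_pair (v x y : V) : Prop :=
  x != y /\ symdiff (inN x) (inN y) = [set v].

Definition location_forced (v : V) : Prop :=
  exists x y, loc_pair v x y.

Definition double_forced (v : V) : Prop :=
  (domination_forced v /\ location_forced v) \/
  (exists x y x' y', loc_pair v x y /\ loc_pair v x' y' /\
     [set x; y] != [set x'; y']).

End Digraph.

(* Main.v *)
Require Import Defs.
From mathcomp Require Import all_boot all_algebra.
From Stdlib Require Import Classical.
Import GRing.Theory.

Section Aux.
Variables (V : finType) (arc : rel V).
Local Open Scope ring_scope.

Definition chi (A : {set V}) : 'rV['F_2]_#|V| :=
  \row_j ((enum_val j \in A) : nat)%:R.

Lemma chiD A B : chi (symdiff A B) = chi A + chi B.
Proof.
apply/rowP => j; rewrite !mxE /symdiff !inE.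
by case: (enum_val j \in A); case: (enum_val j \in B); apply/eqP.
Qed.

Lemma chi1 v : chi [set v] = delta_mx 0 (enum_rank v).
Proof.
apply/rowP => j; rewrite !mxE in_set1 -{1}(enum_rankK v) (inj_eq enum_val_inj).
by [].
Qed.

Lemma addxx (a : 'rV['F_2]_#|V|) : a + a = 0.
Proof.
by rewrite -mulr2n -scaler_nat (_ : (2%:R : 'F_2) = 0) ?scale0r //; apply/eqP.
Qed.

End Aux.
Arguments chi {V}. Arguments chiD {V}. Arguments chi1 {V}. Arguments addxx {V}.

Local Open Scope ring_scope.
Theorem proposition11 (V : finType) (arc : rel V) :
  locatable arc -> gamma_OL_is arc #|V| ->
  forall v : V, ~ double_forced arc v.
Proof.
move=> _ [[S [OS1 OS2] _] Hmin].
have OLDT : OLD arc setT.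
  split=> [w|u w nuw].
    by case: (OS1 w) => u _ Hu; exists u => //; rewrite in_setT.
  by case: (OS2 u w nuw) => s _ Hs; exists s => //; rewrite in_setT.
have Hforced : forall v, (exists w, inN arc w = [set v]) \/
                          (exists x y, loc_pair arc v x y).
  move=> v.
  have nOLD : ~ OLD arc (setT :\ v).
    move/Hmin; rewrite -cardsT (cardsD1 v setT) in_setT.
    by rewrite add1n ltnn.
  case: OLDT => [T1 T2].
  have [H1|H1] := classic (forall w, exists2 u, u \in setT :\ v & u \in inN arc w).
    right.
    have [H2|H2] := classic (forall u w, u != w ->
       exists2 s, s \in setT :\ v & (s \in inN arc u) != (s \in inN arc w)).
      by case: nOLD; split.
    move: H2 => /not_all_ex_not [u /not_all_ex_not [w H2]].
    have nuw : u != w by apply/negP => /eqP E; apply: H2; rewrite E eqxx.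
    have H3 : forall s, s != v -> (s \in inN arc u) = (s \in inN arc w).
      move=> s nsv; apply/eqP; apply/negP => Hs; apply: H2 => _; exists s; last exact/negP.
      by rewrite !inE nsv.
    exists u; exists w; split=> //.
    apply/setP => z; rewrite /symdiff !in_setU !in_setD in_set1.
    have [->|nzv] := eqVneq z v.
      case: (T2 u w nuw) => s _ Hs.
      have [Esv|nsv] := eqVneq s v; first by move: Hs; rewrite Esv;
        case: (v \in inN arc u); case: (v \in inN arc w).
      by rewrite (H3 s nsv) eqxx in Hs.
    by rewrite (H3 z nzv); case: (z \in inN arc w).
  left.
  move: H1 => /not_all_ex_not [w H1].
  exists w.
  have H3 : forall s, s \in inN arc w -> s = v.
    move=> s Hs; apply/eqP; apply/negPn/negP => nsv; apply: H1; exists s => //.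
    by rewrite in_setD1 nsv in_setT.
  apply/setP => z; rewrite in_set1.
  apply/idP/eqP; first exact: H3.
  move=> ->; case: (T1 w) => u _ Hu; by rewrite -(H3 u Hu).
pose M : 'M['F_2]_#|V| := \matrix_i chi (inN arc (enum_val i)).
have hrow : forall x, row (enum_rank x) M = chi (inN arc x).
  by move=> x; rewrite rowK enum_rankK.
have Hfull : row_full M.
  rewrite -sub1mx; apply/row_subP => j; rewrite row1.
  have -> : j = enum_rank (enum_val j) by rewrite enum_valK.
  rewrite -chi1.
  case: (Hforced (enum_val j)) => [[w Hw]|[x [y [_ Hxy]]]].
    by rewrite -Hw -hrow row_sub.
  by rewrite -Hxy chiD -!hrow addmx_sub ?row_sub.
have Hfree : row_free M by rewrite row_free_unit -row_full_unit.
have key : forall u : 'rV['F_2]_#|V|, u *m M = 0 -> u = 0.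
  by move=> u Hu; apply/eqP; rewrite -(mulmx_free_eq0 _ Hfree) Hu.
pose e x : 'rV['F_2]_#|V| := delta_mx 0 (enum_rank x).
have eM : forall x, e x *m M = chi (inN arc x).
  by move=> x; rewrite -rowE hrow.
move=> v [[[w Hw] [x [y [nxy Hxy]]]] | [x [y [x' [y' [[nxy Hxy] [[nxy' Hxy'] Hne]]]]]]].
  have := key (e w + e x + e y).
  rewrite !mulmxDl !eM -addrA -chiD Hxy -Hw addxx => /(_ erefl).
  have [Ewy|nwy] := eqVneq w y.
    move/(congr1 (fun u : 'rV['F_2]_#|V| => u 0 (enum_rank x))).
    rewrite !mxE !(inj_eq enum_rank_inj) eqxx Ewy (negbTE nxy) /= eqxx.
    move/eqP => H. exact: (notF H).
  move/(congr1 (fun u : 'rV['F_2]_#|V| => u 0 (enum_rank y))).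
  rewrite !mxE !(inj_eq enum_rank_inj) (eq_sym y w) (negbTE nwy) (eq_sym y x) (negbTE nxy) !eqxx /=.
  by move/eqP => H; exact: (notF H).
have := key (e x + e y + (e x' + e y')).
rewrite !mulmxDl !eM -chiD -chiD Hxy Hxy' addxx => /(_ erefl) H.
have Hx := congr1 (fun u : 'rV['F_2]_#|V| => u 0 (enum_rank x)) H.
have Hy := congr1 (fun u : 'rV['F_2]_#|V| => u 0 (enum_rank y)) H.
move: Hne Hx Hy; rewrite !mxE !(inj_eq enum_rank_inj) /= !eqxx (eq_sym y x) (negbTE nxy).
case E1: (x == x'); case E2: (x == y'); case E3: (y == x'); case E4: (y == y').
all: move=> Hne Hx Hy; try (move/eqP: Hx => Hx; exact: (notF Hx));
  try (move/eqP: Hy => Hy; exact: (notF Hy)).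
all: move/eqP: E1; move/eqP: E2; move/eqP: E3; move/eqP: E4.
- by move=> _ Ey _ Ex; move: nxy; rewrite Ex Ey eqxx.
- by move=> Ey _ _ Ex; move: Hne; rewrite Ex Ey eqxx.
- by move=> _ Ey Ex _; move: Hne; rewrite Ex Ey setUC eqxx.
- by move=> Ey _ Ex _; move: nxy; rewrite Ex Ey eqxx.
Qed.
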